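(* Let $m\ge1$, $s_1,\dots,s_m\in\mathbb{R}$ and $\alpha\in[0,1]$. For $\gamma\in[0,1]$ let $N(\gamma):=\sum_{i=1}^m\chi_{\alpha,\gamma}(s_i)$. Then $$\int_0^1\big(N(\gamma)-\gamma m\big)^2\,d\gamma\ \ge\ \frac1{12}.$$
   Context: For $r\in\mathbb{R}$, $\{r\}:=r-\lfloor r\rfloor$. For $\alpha\in\mathbb{R}$, $\gamma\in[0,1]$, $S_{\alpha,\alpha+\gamma}:=\{x\in[0,1]:\{x-\alpha\}\le\gamma\}$, and $\chi_{\alpha,\gamma}(x):=1$ if $\{x\}\in S_{\alpha,\alpha+\gamma}$, and $0$ otherwise. *)

(* Defs.v *)
From Stdlib Require Import Reals Lra Lia List.
Open Scope R_scope.

(* {r} := r - floor r ; Stdlib's frac_part r = r - IZR (Int_part r), Int_part = floor *)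
Definition frac (r : R) : R := frac_part r.

Definition in_S (alpha gamma x : R) : Prop :=
  0 <= x <= 1 /\ frac (x - alpha) <= gamma.

Definition chi (alpha gamma x : R) : R :=
  if Rle_dec 0 (frac x) then
    if Rle_dec (frac x) 1 then
      if Rle_dec (frac (frac x - alpha)) gamma then 1 else 0
    else 0
  else 0.

(* N(gamma) = sum_{i=1}^m chi_{alpha,gamma}(s_i), with s indexed 0..m-1 *)
Definition Ncount (m : nat) (s : nat -> R) (alpha gamma : R) : R :=
  fold_right Rplus 0 (map (fun i => chi alpha gamma (s i)) (seq 0 m)).

Definition integrand (m : nat) (s : nat -> R) (alpha : R) (gamma : R) : R :=
  (Ncount m s alpha gamma - gamma * INR m) ^ 2.

(* Main.v *)
Require Import Defs.
From Stdlib Require Import Reals.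
From Stdlib Require Import Lra Lia List Psatz Arith.
From Coquelicot Require Import Coquelicot.
Open Scope R_scope.

Definition ind (c g : R) : R := if Rle_dec c g then 1 else 0.
Definition tt (alpha x : R) : R := frac (frac x - alpha).

Lemma chi_ind alpha g x : chi alpha g x = ind (tt alpha x) g.
Proof.
  unfold chi, ind, tt. destruct (base_fp x) as [H1 H2]. unfold frac.
  destruct (Rle_dec 0 (frac_part x)); [|lra].
  destruct (Rle_dec (frac_part x) 1); [|lra]. reflexivity.
Qed.

Fixpoint Nl (l : list R) (g : R) : R :=
  match l with nil => 0 | t :: r => ind t g + Nl r g end.

Lemma Ncount_gen alpha g s (l : list nat) :
  fold_right Rplus 0 (map (fun i => chi alpha g (s i)) l)
  = Nl (map (fun i => tt alpha (s i)) l) g.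
Proof. induction l; simpl; [reflexivity|]. rewrite chi_ind, IHl. reflexivity. Qed.

Ltac rq := match goal with |- ?a = ?b => change (@eq R a b) end; ring.

Definition IntAll (f : R -> R) := forall a b, ex_RInt f a b.

Lemma IA_ext f g : IntAll f -> (forall x, f x = g x) -> IntAll g.
Proof. intros H E a b. apply (@ex_RInt_ext R_NormedModule) with f; auto. Qed.

Lemma IA_plus f g : IntAll f -> IntAll g -> IntAll (fun x => f x + g x).
Proof. intros Hf Hg a b. apply (ex_RInt_plus f g); auto. Qed.

Lemma IA_scal k f : IntAll f -> IntAll (fun x => k * f x).
Proof. intros Hf a b. apply (ex_RInt_scal f a b k); auto. Qed.

Lemma IA_cont (q : R -> R) : (forall x, continuous q x) -> IntAll q.
Proof. intros Hq a b. apply (@ex_RInt_continuous R_CompleteNormedModule). intros; apply Hq. Qed.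

Lemma ind_cont_le c (q : R -> R) a b : (forall x, continuous q x) -> a <= b ->
  ex_RInt (fun g => ind c g * q g) a b.
Proof.
  intros Hq Hab.
  assert (K1 : forall a b, a <= b -> c <= a -> ex_RInt (fun g => ind c g * q g) a b).
  { intros a' b' H1 H2. apply (@ex_RInt_ext R_NormedModule) with q.
    - intros x Hx. rewrite Rmin_left in Hx by lra. rewrite Rmax_right in Hx by lra.
      unfold ind. destruct (Rle_dec c x); [rq|lra].
    - apply (@ex_RInt_continuous R_CompleteNormedModule). intros; apply Hq. }
  assert (K2 : forall a b, a <= b -> b <= c -> ex_RInt (fun g => ind c g * q g) a b).
  { intros a' b' H1 H2. apply (@ex_RInt_ext R_NormedModule) with (fun _ => 0).
    - intros x Hx. rewrite Rmin_left in Hx by lra. rewrite Rmax_right in Hx by lra.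
      unfold ind. destruct (Rle_dec c x); [lra|rq].
    - apply ex_RInt_const. }
  destruct (Rle_dec c a). apply K1; lra.
  destruct (Rle_dec b c). apply K2; lra.
  apply ex_RInt_Chasles with c. apply K2; lra. apply K1; lra.
Qed.

Lemma IA_ind c (q : R -> R) : (forall x, continuous q x) -> IntAll (fun g => ind c g * q g).
Proof.
  intros Hq a b. destruct (Rle_dec a b).
  apply ind_cont_le; auto.
  apply ex_RInt_swap. apply ind_cont_le; auto; lra.
Qed.

Lemma IA_Nl l (q : R -> R) : (forall x, continuous q x) -> IntAll (fun g => Nl l g * q g).
Proof.
  intros Hq. induction l; simpl.
  - apply IA_ext with (fun _ => 0). intros a b; apply ex_RInt_const. intros; ring.
  - apply IA_ext with (fun g => ind a g * q g + Nl l g * q g).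
    apply IA_plus; auto. apply IA_ind; auto. intros; ring.
Qed.

Lemma ind_mul t u g : ind t g * ind u g = ind (Rmax t u) g * 1.
Proof.
  unfold ind, Rmax. destruct (Rle_dec t u); destruct (Rle_dec t g);
  destruct (Rle_dec u g); try destruct (Rle_dec u g); try destruct (Rle_dec t g); lra.
Qed.

Lemma IA_ind_Nl t l : IntAll (fun g => ind t g * Nl l g).
Proof.
  induction l; simpl.
  - apply IA_ext with (fun _ => 0). intros a b; apply ex_RInt_const. intros; ring.
  - apply IA_ext with (fun g => ind (Rmax t a) g * 1 + ind t g * Nl l g).
    apply IA_plus; auto. apply IA_ind. intros; apply continuous_const.
    intros; rewrite <- ind_mul; ring.
Qed.

Lemma IA_sq l l' : IntAll (fun g => Nl l g * Nl l' g).
Proof.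
  induction l; simpl.
  - apply IA_ext with (fun _ => 0). intros a b; apply ex_RInt_const. intros; ring.
  - apply IA_ext with (fun g => ind a g * Nl l' g + Nl l g * Nl l' g).
    apply IA_plus; auto. apply IA_ind_Nl. intros; ring.
Qed.

Lemma IA_F L M : IntAll (fun g => (Nl L g - g * M) ^ 2).
Proof.
  apply IA_ext with (fun g => Nl L g * Nl L g + (-2 * M) * (Nl L g * g) + (M*M) * (g*g)).
  apply IA_plus. apply IA_plus. apply IA_sq. apply IA_scal. apply IA_Nl.
  intros; apply continuous_id.
  apply IA_scal. apply IA_cont. intros x. apply (@ex_derive_continuous R_AbsRing R_NormedModule); auto_derive; auto.
  intros; ring.
Qed.

Lemma Nl_nat l g : exists n : nat, Nl l g = INR n.
Proof.
  induction l as [|t l [n Hn]]; simpl. exists 0%nat; reflexivity.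
  unfold ind; destruct (Rle_dec t g).
  exists (S n). rewrite S_INR, Hn; ring.
  exists n. rewrite Hn; ring.
Qed.

Lemma pw1 (n k : nat) x : INR k <= x <= INR k + /2 -> (x - INR k)^2 <= (INR n - x)^2.
Proof.
  intros Hx. destruct (le_lt_dec n k) as [H|H].
  - apply le_INR in H. nra.
  - apply le_INR in H. rewrite S_INR in H. nra.
Qed.

Lemma pw2 (n k : nat) x : INR k + /2 <= x <= INR k + 1 -> (INR k + 1 - x)^2 <= (INR n - x)^2.
Proof.
  intros Hx. destruct (le_lt_dec n k) as [H|H].
  - apply le_INR in H. nra.
  - apply le_INR in H. rewrite S_INR in H. nra.
Qed.

Lemma I1 (M K : R) : 0 < M ->
  is_RInt (fun g => (g*M - K)^2) (K/M) ((K+/2)/M) (1/(24*M)).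
Proof.
  intros HM.
  assert (H := is_RInt_derive (fun g => (g*M - K)^3/(3*M)) (fun g => (g*M - K)^2)
                (K/M) ((K+/2)/M)).
  replace (1/(24*M)) with (minus ((fun g => (g*M - K)^3/(3*M)) ((K+/2)/M))
                                 ((fun g => (g*M - K)^3/(3*M)) (K/M))).
  apply H.
  - intros x _. auto_derive; auto. field. lra.
  - intros x _. apply (@ex_derive_continuous R_AbsRing R_NormedModule); auto_derive; auto.
  - unfold minus, plus, opp; simpl. field. lra.
Qed.

Lemma I2 (M K : R) : 0 < M ->
  is_RInt (fun g => (K + 1 - g*M)^2) ((K+/2)/M) ((K+1)/M) (1/(24*M)).
Proof.
  intros HM.
  assert (H := is_RInt_derive (fun g => - (K + 1 - g*M)^3/(3*M)) (fun g => (K + 1 - g*M)^2)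
                ((K+/2)/M) ((K+1)/M)).
  replace (1/(24*M)) with (minus ((fun g => - (K + 1 - g*M)^3/(3*M)) ((K+1)/M))
                                 ((fun g => - (K + 1 - g*M)^3/(3*M)) ((K+/2)/M))).
  apply H.
  - intros x _. auto_derive; auto. field. lra.
  - intros x _. apply (@ex_derive_continuous R_AbsRing R_NormedModule); auto_derive; auto.
  - unfold minus, plus, opp; simpl. field. lra.
Qed.

Section Main.
Variables (L : list R) (M : R) (f : R -> R).
Hypothesis Hf : forall g, f g = (Nl L g - g*M)^2.
Hypothesis HM : 0 < M.

Lemma IAf : IntAll f.
Proof. apply IA_ext with (fun g => (Nl L g - g*M)^2). apply IA_F. intros; rewrite Hf; reflexivity. Qed.

Lemma divle (a b : R) : a <= b -> a / M <= b / M.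
Proof. intros; unfold Rdiv; apply Rmult_le_compat_r; [left; apply Rinv_0_lt_compat|]; lra. Qed.

Lemma mulbounds (a x : R) : a / M < x -> a < x * M.
Proof. intros H. assert (E : a = a / M * M) by (field; lra). nra. Qed.
Lemma mulbounds2 (a x : R) : x < a / M -> x * M < a.
Proof. intros H. assert (E : a = a / M * M) by (field; lra). nra. Qed.

Lemma piece1 (k : nat) : 1/(24*M) <= RInt f (INR k/M) ((INR k+/2)/M).
Proof.
  rewrite <- (is_RInt_unique _ _ _ _ (I1 M (INR k) HM)).
  apply RInt_le.
  - apply divle; lra.
  - eexists; apply I1; auto.
  - apply IAf.
  - intros x [H1 H2]. apply mulbounds in H1. apply mulbounds2 in H2.
    rewrite Hf. destruct (Nl_nat L x) as [n ->]. apply pw1; lra.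
Qed.

Lemma piece2 (k : nat) : 1/(24*M) <= RInt f ((INR k+/2)/M) ((INR k+1)/M).
Proof.
  rewrite <- (is_RInt_unique _ _ _ _ (I2 M (INR k) HM)).
  apply RInt_le.
  - apply divle; lra.
  - eexists; apply I2; auto.
  - apply IAf.
  - intros x [H1 H2]. apply mulbounds in H1. apply mulbounds2 in H2.
    rewrite Hf. destruct (Nl_nat L x) as [n ->].
    replace ((INR n - x * M)^2) with ((INR n - (x*M))^2) by ring.
    replace ((INR k + 1 - x * M)^2) with ((INR k + 1 - (x*M))^2) by ring.
    apply pw2; lra.
Qed.

Lemma main_ind (n : nat) : INR n / (12*M) <= RInt f 0 (INR n / M).
Proof.
  induction n.
  - simpl. replace (0 / M) with 0 by (field; lra). rewrite RInt_point.
    change (zero : R) with 0. unfold Rdiv; lra.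
  - rewrite <- (RInt_Chasles f 0 (INR n / M) (INR (S n) / M)) by apply IAf.
    rewrite <- (RInt_Chasles f (INR n / M) ((INR n + /2) / M) (INR (S n) / M)) by apply IAf.
    rewrite S_INR.
    pose proof (piece1 n). pose proof (piece2 n).
    change (plus ?a ?b) with (a + b).
    replace ((INR n + 1) / (12 * M)) with (INR n / (12*M) + 1/(24*M) + 1/(24*M)) by (field; lra).
    change (plus ?a ?b) with (a + b). lra.
Qed.

End Main.

Theorem lemma3p3 (m : nat) (s : nat -> R) (alpha : R)
  (hm : (1 <= m)%nat) (halpha : 0 <= alpha <= 1) :
  exists pr : Riemann_integrable (integrand m s alpha) 0 1,
    1 / 12 <= RiemannInt pr.
Proof.
  set (L := map (fun i => tt alpha (s i)) (seq 0 m)).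
  assert (Hf : forall g, integrand m s alpha g = (Nl L g - g * INR m)^2).
  { intros g. unfold integrand, Ncount. rewrite Ncount_gen. reflexivity. }
  assert (HM : 0 < INR m) by (apply lt_0_INR; lia).
  exists (ex_RInt_Reals_0 _ _ _ (IAf L (INR m) _ Hf 0 1)).
  pose proof (main_ind L (INR m) _ Hf HM m).
  replace (INR m / INR m) with 1 in H by (field; lra).
  replace (INR m / (12 * INR m)) with (1/12) in H by (field; lra).
  rewrite <- RInt_Reals. exact H.
Qed.
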